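(* Let $g:\mathbb{R}^n\to\mathbb{R}$ be a single convex differentiable constraint function whose gradient is $L$-Lipschitz, let $\mathcal{S}=\{\theta:g(\theta)\le0\}$ with $r\mathbb{K}\subseteq\mathcal{S}\subseteq R\mathbb{K}=:\mathcal{B}$ ($\mathbb{K}$ the closed unit ball at the origin, $0<r<1$), and let $f_1,\dots,f_T$ be convex with $f_t$ and $g$ Lipschitz on $\mathcal{B}$ with constant at most $G$. Run the algorithm $\lambda_t=[g(\theta_t)]_+/(\sigma\eta)$, $\theta_{t+1}=\Pi_{\mathcal{B}}\big(\theta_t-\eta(\partial f_t(\theta_t)+\lambda_t\partial([g(\theta_t)]_+))\big)$, where $\partial([g(\theta)]_+)=0$ if $g(\theta)\le0$ and $\nabla g(\theta)$ otherwise, with $\alpha\in(0,1)$, $\sigma=\frac{2G^2}{2(1-\alpha)}$ and $\eta=\frac1{G\sqrt{2RT}}$. Then for $T$ large enough, if $[g(\theta_1)]_+\le O(T^{-1/6})$ then $[g(\theta_t)]_+\le O(T^{-1/6})$ for all $t\in\{1,\dots,T\}$.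
   Context: $[a]_+=\max\{a,0\}$; $\Pi_{\mathcal{B}}$ is the Euclidean projection onto $\mathcal{B}$. These are the parameters $\sigma=\frac{(m+1)G^2}{2(1-\alpha)}$, $\eta=\frac1{G\sqrt{(m+1)RT}}$ with $m=1$. *)

(* Defs.v *)
From HB Require Import structures.
From mathcomp Require Import all_boot all_order all_algebra.
From mathcomp Require Import all_classical all_reals all_analysis.
Set Implicit Arguments. Unset Strict Implicit. Unset Printing Implicit Defensive.
Import Order.TTheory GRing.Theory Num.Theory.
Import numFieldNormedType.Exports.
Local Open Scope ring_scope.

Definition oc_dotv {R : realType} {n : nat} (u v : 'rV[R]_n) : R :=
  \sum_(i < n) u ord0 i * v ord0 i.
Definition oc_enorm {R : realType} {n : nat} (u : 'rV[R]_n) : R :=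
  Num.sqrt (oc_dotv u u).

Definition oc_pospart {R : realType} (a : R) : R := Num.max a 0.

Definition oc_ballK {R : realType} {n : nat} (rho : R) : set 'rV[R]_n :=
  [set x | oc_enorm x <= rho].

Definition oc_convex_fun {R : realType} {n : nat} (f : 'rV[R]_n -> R) : Prop :=
  forall (x y : 'rV[R]_n) (a : R), 0 <= a -> a <= 1 ->
    f (a *: x + (1 - a) *: y) <= a * f x + (1 - a) * f y.

Definition oc_lipschitz_on {R : realType} {n : nat} (A : set 'rV[R]_n)
    (G : R) (f : 'rV[R]_n -> R) : Prop :=
  forall x y, A x -> A y -> `|f x - f y| <= G * oc_enorm (x - y).

Definition oc_subgradient {R : realType} {n : nat} (f : 'rV[R]_n -> R)
    (x v : 'rV[R]_n) : Prop :=
  forall y, f x + oc_dotv v (y - x) <= f y.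

Definition oc_is_proj {R : realType} {n : nat} (A : set 'rV[R]_n)
    (u p : 'rV[R]_n) : Prop :=
  A p /\ forall y, A y -> oc_enorm (u - p) <= oc_enorm (u - y).

Definition oc_is_gradient {R : realType} {n : nat} (g : 'rV[R]_n -> R)
    (dg : 'rV[R]_n -> 'rV[R]_n) : Prop :=
  forall x, differentiable g x /\ forall h, 'd g x h = oc_dotv (dg x) h.

Definition oc_dpos {R : realType} {n : nat} (g : 'rV[R]_n -> R)
    (dg : 'rV[R]_n -> 'rV[R]_n) (x : 'rV[R]_n) : 'rV[R]_n :=
  if g x <= 0 then 0 else dg x.

(* Parameters with m = 1 *)
Definition oc_sigma_par {R : realType} (G alpha : R) : R :=
  (2 * G ^+ 2) / (2 * (1 - alpha)).
Definition oc_eta_par {R : realType} (G Rad : R) (T : nat) : R :=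
  1 / (G * Num.sqrt (2 * Rad * T%:R)).

Definition oc_alg_step {R : realType} {n : nat} (g : 'rV[R]_n -> R)
    (dg : 'rV[R]_n -> 'rV[R]_n) (Rad sigma eta : R)
    (theta_t v_t theta_next : 'rV[R]_n) : Prop :=
  let lambda := oc_pospart (g theta_t) / (sigma * eta) in
  oc_is_proj (oc_ballK Rad) (theta_t - eta *: (v_t + lambda *: oc_dpos g dg theta_t))
          theta_next.

(* Main.v *)
Require Import Defs.
From HB Require Import structures.
From mathcomp Require Import all_boot all_order all_algebra.
From mathcomp Require Import all_classical all_reals all_analysis.
From mathcomp Require Import ring lra.
Import Order.TTheory GRing.Theory Num.Theory.
Import numFieldNormedType.Exports.
Local Open Scope classical_set_scope.
Local Open Scope ring_scope.
Set Implicit Arguments. Unset Strict Implicit.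
Lemma phi_derive (R : realType) (n : nat) (g : 'rV[R]_n -> R) dg (x h : 'rV[R]_n) (s : R) :
  oc_is_gradient g dg ->
  is_derive s 1 (fun t : R => g (x + t *: h)) (oc_dotv (dg (x + s *: h)) h).
Proof.
move=> Hg; have [dif Hd] := Hg (x + s *: h).
have E : (fun t : R => t^-1 *: (((fun t : R => g (x + t *: h)) \o shift s) (t *: 1) - g (x + s *: h)))
   = (fun t : R => t^-1 *: ((g \o shift (x + s *: h)) (t *: h) - g (x + s *: h))).
  apply/funext => t /=; congr (_ *: (g _ - _)).
  by rewrite [t *: 1]mulr1 scalerDl addrCA addrC.
apply: DeriveDef.
  rewrite /derivable E; have := @diff_derivable _ _ _ _ _ h dif; rewrite /derivable; exact.
by rewrite /derive E -/(derive g _ h) deriveE.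
Qed.

Lemma mvt_line (R : realType) (n : nat) (g : 'rV[R]_n -> R) dg (x h : 'rV[R]_n) :
  oc_is_gradient g dg ->
  exists2 c : R, 0 < c < 1 & g (x + h) - g x = oc_dotv (dg (x + c *: h)) h.
Proof.
move=> Hg.
have D := fun s : R => @phi_derive R n g dg x h s Hg.
have Hd : forall s : R, s \in `]0, 1[ -> is_derive s 1 (fun t : R => g (x + t *: h)) (oc_dotv (dg (x + s *: h)) h).
  by move=> s Hs; exact: D.
have Hc0 : {within `[0, 1], continuous (fun t : R => g (x + t *: h))}.
  apply: derivable_within_continuous => s Hs; exact: (@ex_derive _ _ _ _ _ _ _ (D s)).
have [c Hc E] := @MVT R (fun t : R => g (x + t *: h)) (fun s => oc_dotv (dg (x + s *: h)) h) 0 1 ltr01 Hd Hc0.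
exists c; first by move: Hc; rewrite in_itv.
by move: E; rewrite scale1r scale0r addr0 subr0 mulr1.
Qed.
Lemma dotC (R : realType) n (u v : 'rV[R]_n) : oc_dotv u v = oc_dotv v u.
Proof. by apply: eq_bigr => i _; rewrite mulrC. Qed.

Lemma dotDl (R : realType) n (u v w : 'rV[R]_n) :
  oc_dotv (u + v) w = oc_dotv u w + oc_dotv v w.
Proof. by rewrite /oc_dotv -big_split; apply: eq_bigr => i _; rewrite !mxE mulrDl. Qed.

Lemma dotZl (R : realType) n (k : R) (u w : 'rV[R]_n) :
  oc_dotv (k *: u) w = k * oc_dotv u w.
Proof. by rewrite /oc_dotv mulr_sumr; apply: eq_bigr => i _; rewrite !mxE mulrA. Qed.

Lemma dotNl (R : realType) n (u w : 'rV[R]_n) : oc_dotv (- u) w = - oc_dotv u w.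
Proof. by rewrite -scaleN1r dotZl mulN1r. Qed.

Lemma dotBl (R : realType) n (u v w : 'rV[R]_n) :
  oc_dotv (u - v) w = oc_dotv u w - oc_dotv v w.
Proof. by rewrite dotDl dotNl. Qed.

Lemma dotDr (R : realType) n (u v w : 'rV[R]_n) :
  oc_dotv w (u + v) = oc_dotv w u + oc_dotv w v.
Proof. by rewrite dotC dotDl !(dotC w). Qed.

Lemma dotZr (R : realType) n (k : R) (u w : 'rV[R]_n) :
  oc_dotv w (k *: u) = k * oc_dotv w u.
Proof. by rewrite dotC dotZl dotC. Qed.

Lemma dotNr (R : realType) n (u w : 'rV[R]_n) : oc_dotv w (- u) = - oc_dotv w u.
Proof. by rewrite dotC dotNl dotC. Qed.

Lemma dotBr (R : realType) n (u v w : 'rV[R]_n) :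
  oc_dotv w (u - v) = oc_dotv w u - oc_dotv w v.
Proof. by rewrite dotDr dotNr. Qed.

Lemma dot0l (R : realType) n (w : 'rV[R]_n) : oc_dotv 0 w = 0.
Proof. by rewrite -(scale0r (0 : 'rV[R]_n)) dotZl mul0r. Qed.

Lemma dot0r (R : realType) n (w : 'rV[R]_n) : oc_dotv w 0 = 0.
Proof. by rewrite dotC dot0l. Qed.

Lemma dot_ge0 (R : realType) n (u : 'rV[R]_n) : 0 <= oc_dotv u u.
Proof. by apply: sumr_ge0 => i _; rewrite -expr2 sqr_ge0. Qed.

Lemma enorm_ge0 (R : realType) n (u : 'rV[R]_n) : 0 <= oc_enorm u.
Proof. exact: sqrtr_ge0. Qed.

Lemma enorm_sqr (R : realType) n (u : 'rV[R]_n) : oc_enorm u ^+ 2 = oc_dotv u u.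
Proof. by rewrite /oc_enorm sqr_sqrtr // dot_ge0. Qed.

Lemma sqr_le (R : realType) (a b : R) : 0 <= b -> a ^+ 2 <= b ^+ 2 -> a <= b.
Proof. move=> hb h; nra. Qed.

Lemma CS2 (R : realType) n (u v : 'rV[R]_n) :
  oc_dotv u v ^+ 2 <= oc_dotv u u * oc_dotv v v.
Proof.
set X := oc_dotv u u; set Y := oc_dotv v v; set Z := oc_dotv u v.
have key : forall t, 0 <= X - 2 * t * Z + t ^+ 2 * Y.
  move=> t; have := dot_ge0 (u - t *: v).
  rewrite !(dotBl, dotBr, dotZl, dotZr) -/X -/Y -/Z (dotC v u) -/Z.
  by move=> h; lra.
have hY : 0 <= Y by apply: dot_ge0.
have hX : 0 <= X by apply: dot_ge0.
have [Y0|Ypos] := eqVneq Y 0.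
  have [Z0|Zn] := eqVneq Z 0; first by rewrite Z0 Y0 expr0n /= mulr0.
  have := key ((X + 1) / (2 * Z)); rewrite Y0 mulr0 addr0.
  have -> : 2 * ((X + 1) / (2 * Z)) * Z = X + 1 by field.
  by lra.
have Yp : 0 < Y by rewrite lt_def Ypos hY.
have := key (Z / Y).
have -> : X - 2 * (Z / Y) * Z + (Z / Y) ^+ 2 * Y = (X * Y - Z ^+ 2) / Y by field.
move=> h; have : 0 <= (X * Y - Z ^+ 2) / Y * Y by apply: mulr_ge0.
by rewrite divfK ?Ypos // => h2; lra.
Qed.

Lemma CS (R : realType) n (u v : 'rV[R]_n) :
  oc_dotv u v <= oc_enorm u * oc_enorm v.
Proof.
have h := CS2 u v; rewrite -!enorm_sqr in h.
have := enorm_ge0 u; have := enorm_ge0 v; move=> hv hu.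
have : `|oc_dotv u v| <= oc_enorm u * oc_enorm v.
  by apply: sqr_le; [exact: mulr_ge0|rewrite real_normK ?num_real // exprMn].
by move=> h2; apply: le_trans h2; apply: ler_norm.
Qed.

Lemma enormZ (R : realType) n (k : R) (u : 'rV[R]_n) :
  oc_enorm (k *: u) = `|k| * oc_enorm u.
Proof.
by rewrite /oc_enorm dotZl dotZr mulrA -expr2 sqrtrM ?sqr_ge0 // sqrtr_sqr.
Qed.

Lemma enormN (R : realType) n (u : 'rV[R]_n) : oc_enorm (- u) = oc_enorm u.
Proof. by rewrite -scaleN1r enormZ normrN normr1 mul1r. Qed.

Lemma enormB (R : realType) n (u v : 'rV[R]_n) : oc_enorm (u - v) = oc_enorm (v - u).
Proof. by rewrite -enormN opprB. Qed.

Lemma enorm0 (R : realType) n : oc_enorm (0 : 'rV[R]_n) = 0.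
Proof. by rewrite /oc_enorm dot0l sqrtr0. Qed.

Lemma enormD (R : realType) n (u v : 'rV[R]_n) :
  oc_enorm (u + v) <= oc_enorm u + oc_enorm v.
Proof.
apply: sqr_le; first by rewrite addr_ge0 ?enorm_ge0.
rewrite enorm_sqr dotDl !dotDr (dotC v u) sqrrD -!enorm_sqr.
have := CS u v; lra.
Qed.
Lemma smooth_aux (R : realType) n (g : 'rV[R]_n -> R) dg L (x h : 'rV[R]_n) :
  oc_is_gradient g dg -> 0 <= L ->
  (forall x y, oc_enorm (dg x - dg y) <= L * oc_enorm (x - y)) ->
  `|g (x + h) - g x - oc_dotv (dg x) h| <= L * oc_dotv h h.
Proof.
move=> Hg L0 HL; have [c /andP [c0 c1] E] := mvt_line x h Hg.
rewrite E -dotBl.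
set d := dg (x + c *: h) - dg x.
have Hd : oc_enorm d <= L * (c * oc_enorm h).
  apply: le_trans (HL _ _) _; by rewrite addrC addKr enormZ (ger0_norm (ltW c0)).
have hh := enorm_ge0 h; have hd := enorm_ge0 d.
have B : oc_enorm d * oc_enorm h <= L * oc_dotv h h.
  rewrite -enorm_sqr; apply: le_trans (ler_wpM2r hh Hd) _.
  rewrite -mulrA ler_wpM2l // -mulrA expr2 ler_piMl ?mulr_ge0 //; exact: ltW.
have := CS d h; have := CS (- d) h; rewrite dotNl enormN.
move=> h1 h2; rewrite ler_norml; apply/andP; split; lra.
Qed.

Lemma smooth_up (R : realType) n (g : 'rV[R]_n -> R) dg L (x h : 'rV[R]_n) :
  oc_is_gradient g dg -> 0 <= L ->
  (forall x y, oc_enorm (dg x - dg y) <= L * oc_enorm (x - y)) ->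
  g (x + h) <= g x + oc_dotv (dg x) h + L * oc_dotv h h.
Proof.
move=> Hg L0 HL; have := smooth_aux x h Hg L0 HL; rewrite ler_norml => /andP [_ h2]; lra.
Qed.

Lemma smooth_lo (R : realType) n (g : 'rV[R]_n -> R) dg L (x h : 'rV[R]_n) :
  oc_is_gradient g dg -> 0 <= L ->
  (forall x y, oc_enorm (dg x - dg y) <= L * oc_enorm (x - y)) ->
  g x + oc_dotv (dg x) h - L * oc_dotv h h <= g (x + h).
Proof.
move=> Hg L0 HL; have := smooth_aux x h Hg L0 HL; rewrite ler_norml => /andP [h2 _]; lra.
Qed.

Lemma grad_lemma (R : realType) n (g : 'rV[R]_n -> R) dg L (x : 'rV[R]_n) :
  oc_convex_fun g -> oc_is_gradient g dg -> 0 <= L ->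
  (forall x y, oc_enorm (dg x - dg y) <= L * oc_enorm (x - y)) ->
  g 0 <= 0 -> g x <= oc_dotv (dg x) x.
Proof.
move=> Hc Hg L0 HL g0.
set a := g x; set Z := oc_dotv (dg x) x; set X := oc_dotv x x.
have X0 : 0 <= X by apply: dot_ge0.
have key : forall s, 0 < s -> s <= 1 -> a <= Z + L * s * X.
  move=> s s0 s1.
  have h1 := smooth_lo x (- (s *: x)) Hg L0 HL.
  rewrite dotNr dotNl dotNr opprK dotZl dotZr dotZr -/a -/Z -/X in h1.
  have h2 := Hc 0 x s (ltW s0) s1.
  rewrite scaler0 add0r in h2.
  rewrite (_ : (1 - s) *: x = x + - (s *: x)) in h2; last by rewrite scalerBl scale1r.
  have h3 : s * g 0 <= 0 by rewrite mulr_ge0_le0 // ltW.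
  have h4 : s * a <= s * (Z + L * s * X).
    rewrite -/a in h2; lra.
  by rewrite ler_pM2l in h4.
rewrite leNgt; apply/negP => H.
set d := a - Z.
have d0 : 0 < d by rewrite subr_gt0.
have LX : 0 <= L * X by apply: mulr_ge0.
have dp : 0 < d + L * X by lra.
have := key (d / (d + L * X)) (divr_gt0 d0 dp).
rewrite ler_pdivrMr // mul1r => /(_ ltac:(lra)).
have -> : Z + L * (d / (d + L * X)) * X = Z + (L * X * d) / (d + L * X) by field; lra.
move=> h5.
have h6 : d <= (L * X * d) / (d + L * X).
  move: h5; set q := (L * X * d) / (d + L * X); rewrite /d; lra.
move: h6; rewrite ler_pdivlMr // => h6.
nra.
Qed.

Lemma sqr_mono (R : realType) (a b : R) : 0 <= a -> a <= b -> a ^+ 2 <= b ^+ 2.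
Proof. move=> ha hab; nra. Qed.

Lemma pos_le (R : realType) (a b : R) : a <= b -> oc_pospart a <= oc_pospart b.
Proof.
move=> h; rewrite /oc_pospart ge_max !le_max lexx orbT andbT.
by rewrite h.
Qed.

Lemma proj_lemma (R : realType) n (g : 'rV[R]_n -> R) Rad G (u p : 'rV[R]_n) :
  oc_convex_fun g -> g 0 <= 0 -> 0 <= Rad -> oc_lipschitz_on (oc_ballK Rad) G g ->
  oc_is_proj (oc_ballK Rad) u p -> oc_pospart (g p) <= oc_pospart (g u).
Proof.
move=> Hc g0 R0 HG [Hp Hmin].
set N := oc_enorm u.
have N0 : 0 <= N by apply: enorm_ge0.
pose c := if N <= Rad then 1 else Rad / N.
have [c0 c1 qin qmin] : [/\ 0 <= c, c <= 1, oc_ballK Rad (c *: u) &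
    forall y, oc_ballK Rad y -> oc_enorm (u - c *: u) <= oc_enorm (u - y)].
  rewrite /c; case: ifP => HN.
    split => //; first by rewrite /oc_ballK /= scale1r.
    by move=> y _; rewrite scale1r subrr enorm0 enorm_ge0.
  have NR : Rad < N by rewrite ltNge HN.
  have Np : 0 < N by lra.
  split.
  - exact: divr_ge0.
  - by rewrite ler_pdivrMr // mul1r ltW.
  - by rewrite /oc_ballK /= enormZ ger0_norm ?divr_ge0 // divfK // gt_eqF.
  - move=> y Hy.
    rewrite -{1}(scale1r u) -scalerBl enormZ -/N.
    have -> : `|1 - Rad / N| * N = N - Rad.
      rewrite ger0_norm; last by rewrite subr_ge0 ler_pdivrMr // mul1r ltW.
      by rewrite mulrBl mul1r divfK // gt_eqF.
    have := enormD (u - y) y; rewrite subrK -/N.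
    rewrite /oc_ballK /= in Hy; lra.
set q := c *: u.
have E1 : oc_enorm (u - p) <= oc_enorm (u - q) by apply: Hmin.
have E2 : oc_enorm (u - q) <= oc_enorm (u - p) by apply: qmin.
set m := 2^-1 *: (p + q).
have min : oc_ballK Rad m.
  rewrite /oc_ballK /= /m enormZ ger0_norm ?invr_ge0 ?ler0n //.
  have := enormD p q; rewrite /oc_ballK /= in Hp qin; lra.
have E3 : oc_enorm (u - p) <= oc_enorm (u - m) by apply: Hmin.
have S1 := sqr_mono (enorm_ge0 _) E3.
have S2 := sqr_mono (enorm_ge0 _) E1.
have S3 := sqr_mono (enorm_ge0 _) E2.
rewrite !enorm_sqr in S1 S2 S3.
have Em : u - m = 2^-1 *: ((u - p) + (u - q)).
  by rewrite /m; apply/rowP => i; rewrite !mxE; field.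
have Epq : p - q = (u - q) - (u - p) by apply/rowP => i; rewrite !mxE; ring.
have key : forall a b : 'rV[R]_n,
    oc_dotv a a <= oc_dotv (2^-1 *: (a + b)) (2^-1 *: (a + b)) ->
    oc_dotv a a <= oc_dotv b b -> oc_dotv b b <= oc_dotv a a ->
    oc_dotv (b - a) (b - a) <= 0.
  move=> a b; rewrite dotBl !dotBr dotZl dotZr !dotDl !dotDr (dotC b a); lra.
have PQ : oc_dotv (p - q) (p - q) <= 0.
  by rewrite Epq; apply: key => //; rewrite -Em.
have Npq : oc_enorm (p - q) = 0.
  have h := dot_ge0 (p - q).
  have h2 : oc_enorm (p - q) ^+ 2 = 0 by rewrite enorm_sqr; lra.
  by move/eqP: h2; rewrite expf_eq0 /= => /eqP.
have gpq : g p = g q.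
  have := HG p q Hp qin; rewrite Npq mulr0 normr_le0 subr_eq0 => /eqP //.
rewrite gpq.
have Cq : g q <= c * g u.
  have := Hc u 0 c c0 c1; rewrite scaler0 addr0 -/q.
  have : (1 - c) * g 0 <= 0 by rewrite mulr_ge0_le0 // subr_ge0.
  lra.
apply: le_trans (pos_le Cq) _.
rewrite /oc_pospart ge_max !le_max lexx orbT andbT.
have [gu0|gu0] := leP 0 (g u).
  by rewrite ler_piMl.
by apply/orP; right; rewrite mulr_ge0_le0 // ltW.
Qed.

Lemma step_pre (R : realType) n (g : 'rV[R]_n -> R) dg (L Rad G K sigma eta : R)
    (th v : 'rV[R]_n) :
  oc_convex_fun g -> oc_is_gradient g dg -> 0 <= L ->
  (forall x y, oc_enorm (dg x - dg y) <= L * oc_enorm (x - y)) ->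
  g 0 <= 0 -> 0 < Rad -> 0 < sigma -> 0 < eta -> 0 <= G ->
  oc_enorm (dg th) <= K -> oc_enorm th <= Rad -> oc_enorm v <= G ->
  4 * L * oc_pospart (g th) <= sigma ->
  g (th - eta *: (v + (oc_pospart (g th) / (sigma * eta)) *: oc_dpos g dg th))
  <= oc_pospart (g th) + (eta * K * G + 2 * L * eta ^+ 2 * G ^+ 2)
     - oc_pospart (g th) ^+ 3 / (2 * sigma * Rad ^+ 2).
Proof.
move=> Hc Hg L0 HL g0 Rp sp ep G0 HK Hth Hv H4.
set w := dg th.
have K0 : 0 <= K by apply: le_trans HK; apply: enorm_ge0.
have V0 := sqr_mono (enorm_ge0 v) Hv; rewrite enorm_sqr in V0.
set V := oc_dotv v v in V0.
have hwv : - oc_dotv w v <= K * G.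
  rewrite -dotNl; apply: le_trans (CS _ _) _; rewrite enormN.
  by apply: ler_pM => //; apply: enorm_ge0.
rewrite /oc_dpos /oc_pospart.
have [gle|ggt] := leP (g th) 0.
  rewrite mul0r scale0r addr0 expr0n /= mul0r subr0 add0r.
  have := smooth_up th (- (eta *: v)) Hg L0 HL.
  rewrite dotNr dotNl dotNr opprK dotZl !dotZr -/w -/V.
  move=> h; apply: le_trans h _.
  have h1 : 0 <= L * (eta * (eta * V)) <= 2 * L * eta ^+ 2 * G ^+ 2.
    apply/andP; split; first by rewrite !mulr_ge0 ?dot_ge0 // ltW.
    rewrite expr2.
    have LE : 0 <= L * (eta * eta) by rewrite mulr_ge0 // mulr_ge0 // ltW.
    have := ler_wpM2l LE V0; have : 0 <= L * (eta * eta) * G ^+ 2 by rewrite mulr_ge0 // sqr_ge0.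
    lra.
  have h2 : - (eta * oc_dotv w v) <= eta * K * G.
    rewrite -mulrN -mulrA ler_pM2l //.
  lra.
have gne : (g th <= 0) = false by apply/negbTE; rewrite -ltNge.
rewrite -/(g th).
set a := g th.
set beta := a / sigma.
have E : eta *: (v + a / (sigma * eta) *: w) = eta *: v + beta *: w.
  rewrite scalerDr scalerA; congr (_ + _ *: _).
  by rewrite /beta; field; apply/andP; split; rewrite gt_eqF.
rewrite E.
have := smooth_up th (- (eta *: v + beta *: w)) Hg L0 HL.
rewrite dotNr dotNl dotNr opprK !dotDl !dotDr !dotZl !dotZr -/w -/a -/V.
set W := oc_dotv w w; set vw := oc_dotv v w; rewrite (dotC w v) -/vw.
move=> h; apply: le_trans h _.
have b0 : 0 < beta by apply: divr_gt0.
have W0 : 0 <= W by apply: dot_ge0.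
have h2 : 2 * eta * beta * vw <= eta ^+ 2 * V + beta ^+ 2 * W.
  have := dot_ge0 (eta *: v - beta *: w).
  rewrite !dotBl !dotBr !dotZl !dotZr -/V -/W (dotC w v) -/vw; nra.
have h3 : a ^+ 2 <= W * Rad ^+ 2.
  have g1 := grad_lemma th Hc Hg L0 HL g0; rewrite -/w -/a in g1.
  have g2 := CS w th.
  have g3 : a <= oc_enorm w * Rad.
    apply: le_trans g1 _; apply: le_trans g2 _; apply: ler_wpM2l => //; exact: enorm_ge0.
  have := sqr_mono (ltW ggt) g3; rewrite exprMn enorm_sqr //.
have h4 : 4 * L * beta <= 1.
  rewrite /beta mulrA ler_pdivrMr // mul1r.
  by move: H4; rewrite /oc_pospart max_l // ltW.
have h5 : a ^+ 3 / (2 * sigma * Rad ^+ 2) <= beta * W / 2.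
  rewrite ler_pdivrMr ?mulr_gt0 ?exprn_gt0 //.
  have -> : beta * W / 2 * (2 * sigma * Rad ^+ 2) = a * (W * Rad ^+ 2).
    by rewrite /beta; field; rewrite gt_eqF.
  by rewrite exprS ler_wpM2l // ltW.
have h6 : - (eta * vw) <= eta * K * G.
  by rewrite -mulrN -mulrA ler_pM2l // /vw dotC.
have h7 : L * (2 * eta * beta * vw) <= L * (eta ^+ 2 * V + beta ^+ 2 * W) by apply: ler_wpM2l.
have h8 : L * (eta ^+ 2 * V) <= L * (eta ^+ 2 * G ^+ 2).
  by apply: ler_wpM2l => //; apply: ler_wpM2l => //; apply: sqr_ge0.
have h9 : 2 * L * beta ^+ 2 * W <= beta * W / 2.
  have : 0 <= beta * W by apply: mulr_ge0 => //; apply: ltW.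
  nra.
lra.
Qed.

Lemma scalar_lemma (R : realType) (a E k Q : R) :
  0 <= a -> a <= Q -> 0 < k -> E <= Q / 2 -> E <= Q ^+ 3 / 8 * k ->
  a + E - a ^+ 3 * k <= Q.
Proof.
move=> a0 aQ k0 E1 E2.
have ak : 0 <= a ^+ 3 * k by rewrite mulr_ge0 ?exprn_ge0 // ltW.
have [ah|ah] := leP a (Q / 2); first lra.
have h : (Q / 2) ^+ 3 <= a ^+ 3.
  by apply: lerXn2r; rewrite ?nnegrE //; [lra | apply: ltW].
have : Q ^+ 3 / 8 * k <= a ^+ 3 * k.
  rewrite ler_pM2r //; move: h; rewrite expr_div_n.
  by have -> : (2 : R) ^+ 3 = 8 by rewrite !exprS expr0; lra.
lra.
Qed.

Lemma one_step (R : realType) n (g : 'rV[R]_n -> R) dg (L Rad G K sigma eta Q : R)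
    (th v th' : 'rV[R]_n) :
  oc_convex_fun g -> oc_is_gradient g dg -> 0 <= L ->
  (forall x y, oc_enorm (dg x - dg y) <= L * oc_enorm (x - y)) ->
  g 0 <= 0 -> 0 < Rad -> 0 < sigma -> 0 < eta -> 0 <= G ->
  (forall x, oc_ballK Rad x -> oc_enorm (dg x) <= K) ->
  oc_lipschitz_on (oc_ballK Rad) G g ->
  eta * K * G + 2 * L * eta ^+ 2 * G ^+ 2 <= Q / 2 ->
  eta * K * G + 2 * L * eta ^+ 2 * G ^+ 2 <= Q ^+ 3 / 8 * (1 / (2 * sigma * Rad ^+ 2)) ->
  4 * L * Q <= sigma ->
  oc_ballK Rad th -> oc_enorm v <= G -> oc_pospart (g th) <= Q ->
  oc_alg_step g dg Rad sigma eta th v th' ->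
  oc_ballK Rad th' /\ oc_pospart (g th') <= Q.
Proof.
move=> Hc Hg L0 HL g0 Rp sp ep G0 HK HG E1 E2 HLQ Hth Hv Hp Hstep.
have Hp0 : 0 <= oc_pospart (g th) by rewrite /oc_pospart le_max lexx orbT.
have H4 : 4 * L * oc_pospart (g th) <= sigma.
  apply: le_trans HLQ; apply: ler_wpM2l => //; lra.
have := step_pre Hc Hg L0 HL g0 Rp sp ep G0 (HK _ Hth) Hth Hv H4.
rewrite -/(oc_alg_step _ _ _ _ _ _ _ _) => Hu.
have [Hb Hm] := Hstep.
split => //.
apply: le_trans (proj_lemma Hc g0 (ltW Rp) HG Hstep) _.
rewrite /oc_pospart ge_max; apply/andP; split; last by lra.
apply: le_trans Hu _.
have := scalar_lemma Hp0 Hp (k := 1 / (2 * sigma * Rad ^+ 2)) ltac:(by rewrite divr_gt0 // !mulr_gt0 // exprn_gt0) E1 E2.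
by rewrite mul1r.
Qed.

Lemma gamma6 (R : realType) (T : nat) :
  ((T%:R : R) `^ (- 6^-1)) ^+ 6 = (T%:R)^-1.
Proof.
rewrite -powR_mulrn ?powR_ge0 // -powRrM.
have -> : - (6^-1 : R) * 6%:R = -1 by field.
by rewrite powR_inv1.
Qed.

Lemma gamma_small (R : realType) (eps : R) : 0 < eps ->
  exists N : nat, forall T : nat, (N <= T)%N -> (T%:R : R) `^ (- 6^-1) <= eps.
Proof.
move=> e0.
set B := (eps ^+ 6)^-1.
exists (Num.truncn B).+1 => T HT.
have hB := Num.Theory.truncnS_gt B.
have hT : ((Num.truncn B).+1%:R : R) <= T%:R by rewrite ler_nat.
have B0 : 0 < B by rewrite invr_gt0 exprn_gt0.
have T0 : (0 : R) < T%:R by lra.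
have : ((T%:R : R) `^ (- 6^-1)) ^+ 6 <= eps ^+ 6.
  rewrite gamma6 -(invrK (eps ^+ 6)) -/B.
  rewrite lef_pV2 ?posrE //; lra.
by rewrite (ler_pXn2r (isT : (0 < 6)%N)) ?nnegrE ?powR_ge0 // ltW.
Qed.

Lemma eta_eq (R : realType) (G Rad : R) (T : nat) :
  0 < G -> 0 < Rad -> (0 < T)%N ->
  oc_eta_par G Rad T = (1 / (G * Num.sqrt (2 * Rad))) * ((T%:R : R) `^ (- 6^-1)) ^+ 3.
Proof.
move=> G0 R0 T0.
set q := ((T%:R : R) `^ (- 6^-1)) ^+ 3.
set s := Num.sqrt (T%:R : R).
have Tp : (0 : R) < T%:R by rewrite ltr0n.
have q2 : q ^+ 2 = (T%:R)^-1 by rewrite /q -exprM gamma6.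
have s2 : s ^+ 2 = T%:R by rewrite /s sqr_sqrtr // ltW.
have q0 : 0 <= q by rewrite exprn_ge0 // powR_ge0.
have s0 : 0 <= s by apply: sqrtr_ge0.
have qs : q * s = 1.
  have : (q * s) ^+ 2 = 1 by rewrite exprMn q2 s2 mulVf // gt_eqF.
  move/eqP; rewrite sqrf_eq1 => /orP [/eqP //|/eqP h].
  have : 0 <= q * s by apply: mulr_ge0.
  lra.
rewrite /oc_eta_par sqrtrM ?mulr_ge0 ?ler0n // ?ltW // -/s.
have sp : s != 0 by apply/eqP => h; move: qs; rewrite h mulr0; lra.
have r0 : Num.sqrt (2 * Rad) != 0 by rewrite gt_eqF // sqrtr_gt0 mulr_gt0.
have -> : q = s^-1 by apply: (mulIf sp); rewrite qs mulVf.
by field; rewrite sp r0 gt_eqF.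
Qed.

Lemma ind1 (P : nat -> Prop) (T : nat) : P 1%N ->
  (forall t, (1 <= t < T)%N -> P t -> P t.+1) -> forall t, (1 <= t <= T)%N -> P t.
Proof.
move=> P1 HS; elim => [|t IH] //.
case: t IH => [|t] IH; first by move=> _.
move=> /andP [_ HT]; apply: HS; first by apply/andP.
by apply: IH; apply/andP; split => //; apply: ltnW.
Qed.

Unset Implicit Arguments. Set Strict Implicit.

Theorem lemma5p2 (R : realType) (n : nat)
  (g : 'rV[R]_n -> R) (dg : 'rV[R]_n -> 'rV[R]_n)
  (L G r Rad alpha : R) :
  oc_convex_fun g -> oc_is_gradient g dg ->
  0 <= L -> (forall x y, oc_enorm (dg x - dg y) <= L * oc_enorm (x - y)) ->
  0 < r -> r < 1 ->
  oc_ballK r `<=` [set x | g x <= 0] ->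
  [set x | g x <= 0] `<=` oc_ballK Rad ->
  0 < G -> oc_lipschitz_on (oc_ballK Rad) G g ->
  0 < alpha -> alpha < 1 ->
  forall C : R, 0 < C ->
  exists (T0 : nat) (C' : R), 0 < C' /\
  forall (T : nat) (f : nat -> 'rV[R]_n -> R) (v theta : nat -> 'rV[R]_n),
    (T0 <= T)%N ->
    (forall t, (1 <= t <= T)%N ->
       [/\ oc_convex_fun (f t), oc_lipschitz_on (oc_ballK Rad) G (f t),
           oc_subgradient (f t) (theta t) (v t) & oc_enorm (v t) <= G]) ->
    oc_ballK Rad (theta 1%N) ->
    (forall t, (1 <= t < T)%N ->
       oc_alg_step g dg Rad (oc_sigma_par G alpha) (oc_eta_par G Rad T)
                (theta t) (v t) (theta t.+1)) ->
    oc_pospart (g (theta 1%N)) <= C * (T%:R `^ (- 6^-1)) ->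
    forall t, (1 <= t <= T)%N ->
      oc_pospart (g (theta t)) <= C' * (T%:R `^ (- 6^-1)).
Proof.
move=> Hc Hg L0 HL r0 r1 Hr HS G0 HG a0 a1 C C0.
have g0 : g 0 <= 0 by apply: Hr; rewrite /oc_ballK /= enorm0 ltW.
have [Rle|Rp] := leP Rad 0.
  exists 0%N, 1; split => //.
  move=> T f v theta _ Hf Hb1 Hst _ t Ht.
  have Hball : forall t, (1 <= t <= T)%N -> oc_ballK Rad (theta t).
    by apply: ind1 => // s Hs _; case: (Hst s Hs).
  have h : g (theta t) <= 0.
    apply: Hr; rewrite /oc_ballK /=; have := Hball t Ht; rewrite /oc_ballK /=; lra.
  by rewrite /oc_pospart max_r // mul1r powR_ge0.
set sigma := oc_sigma_par G alpha.
have sp : 0 < sigma.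
  rewrite /sigma /oc_sigma_par divr_gt0 //.
    by rewrite mulr_gt0 // exprn_gt0.
  by rewrite mulr_gt0 //; lra.
set K := oc_enorm (dg 0) + L * Rad.
have HK : forall x, oc_ballK Rad x -> oc_enorm (dg x) <= K.
  move=> x Hx; rewrite /oc_ballK /= in Hx.
  have := enormD (dg 0) (dg x - dg 0); rewrite addrC subrK.
  have := HL x 0; rewrite subr0.
  have : L * oc_enorm x <= L * Rad by apply: ler_wpM2l.
  rewrite /K; lra.
have K0 : 0 <= K by rewrite addr_ge0 ?enorm_ge0 // mulr_ge0 // ltW.
set c := K * G + 2 * L * G ^+ 2.
have c0 : 0 <= c by rewrite addr_ge0 ?mulr_ge0 ?sqr_ge0 // ltW.
set e0 := 1 / (G * Num.sqrt (2 * Rad)).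
have e00 : 0 < e0 by rewrite divr_gt0 // mulr_gt0 // sqrtr_gt0 mulr_gt0.
set k := 1 / (2 * sigma * Rad ^+ 2).
have k0 : 0 < k.
  apply: divr_gt0 => //; apply: mulr_gt0; [exact: mulr_gt0 | exact: exprn_gt0].
set M := C + 1 + 8 * c * e0 / k + 2 * c * e0.
have ce0 : 0 <= c * e0 by rewrite mulr_ge0 // ltW.
have p8 : 0 <= 8 * c * e0 / k.
  apply: divr_ge0; last exact: ltW. by rewrite -mulrA; exact: mulr_ge0.
have p2 : 0 <= 2 * c * e0 by rewrite -mulrA; exact: mulr_ge0.
have M1 : 8 * c * e0 / k <= M.
  rewrite /M; lra.
have M2 : 2 * c * e0 <= M.
  rewrite /M; lra.
have M3 : 1 + C <= M.
  rewrite /M; lra.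
have [N1 H1] := gamma_small (@ltr01 R).
have [N2 H2] := gamma_small (eps := 1 / (e0 + 1)) ltac:(by apply: divr_gt0 => //; lra).
have hLM : 0 <= 4 * L * M by apply: mulr_ge0; [apply: mulr_ge0 => // | lra].
have [N3 H3] := gamma_small (eps := sigma / (4 * L * M + 1))
   ltac:(by apply: divr_gt0 => //; lra).
exists (maxn 1 (maxn N1 (maxn N2 N3))), M; split; first by lra.
move=> T f v theta HT Hf Hb1 Hst Hp1.
move: HT; rewrite !geq_max => /and4P [T1 HN1 HN2 HN3].
set gam := (T%:R : R) `^ (- 6^-1).
have gp : 0 < gam by rewrite powR_gt0 // ltr0n.
have g1 : gam <= 1 := H1 T HN1.
have g2 : gam * (e0 + 1) <= 1.
  by have := H2 T HN2; rewrite -/gam ler_pdivlMr //; lra.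
have g3 : gam * (4 * L * M + 1) <= sigma.
  by have := H3 T HN3; rewrite -/gam ler_pdivlMr //; lra.
have Eeta := eta_eq G0 Rp T1; rewrite -/e0 -/gam in Eeta.
set eta := oc_eta_par G Rad T in Hst Eeta *.
have gam3 : gam ^+ 3 <= gam.
  have h : gam ^+ 2 <= 1 by rewrite expr2 mulr_ile1 // ltW.
  rewrite exprS; have := ler_wpM2l (ltW gp) h; lra.
have gam30 : 0 < gam ^+ 3 by apply: exprn_gt0.
have etap : 0 < eta by rewrite Eeta mulr_gt0.
have eta1 : eta <= 1.
  rewrite Eeta; have : e0 * gam ^+ 3 <= e0 * gam by rewrite ler_pM2l.
  nra.
have Ec : eta * K * G + 2 * L * eta ^+ 2 * G ^+ 2 <= c * eta.
  have : eta ^+ 2 <= eta by rewrite expr2 ler_piMr // ltW.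
  move=> h; have : 2 * L * G ^+ 2 * eta ^+ 2 <= 2 * L * G ^+ 2 * eta.
    apply: ler_wpM2l => //; apply: mulr_ge0; [exact: mulr_ge0 | exact: sqr_ge0].
  rewrite /c; lra.
have HQ : 0 <= M * gam by rewrite mulr_ge0 ?ltW //; lra.
have E1 : eta * K * G + 2 * L * eta ^+ 2 * G ^+ 2 <= (M * gam) / 2.
  apply: le_trans Ec _; rewrite Eeta.
  have : c * (e0 * gam ^+ 3) <= c * e0 * gam by rewrite -mulrA ler_wpM2l // ler_wpM2l // ltW.
  have : 2 * c * e0 * gam <= M * gam by rewrite ler_pM2r.
  lra.
have E2 : eta * K * G + 2 * L * eta ^+ 2 * G ^+ 2 <= (M * gam) ^+ 3 / 8 * k.
  apply: le_trans Ec _; rewrite Eeta.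
  have MM : M <= M ^+ 3.
    have M0 : 0 <= M by lra.
    have : 1 <= M ^+ 2 by rewrite expr2 mulr_ege1 //; lra.
    move=> h; rewrite exprS; have := ler_wpM2l M0 h; lra.
  have h8 : 8 * c * e0 <= M ^+ 3 * k.
    have : 8 * c * e0 / k * k <= M ^+ 3 * k.
      rewrite ler_pM2r //; lra.
    by rewrite divfK ?gt_eqF.
  have : 8 * c * e0 * gam ^+ 3 <= M ^+ 3 * k * gam ^+ 3 by rewrite ler_pM2r.
  rewrite exprMn; lra.
have HLQ : 4 * L * (M * gam) <= sigma.
  have : 0 <= gam by apply: ltW.
  lra.
have P : forall t, (1 <= t <= T)%N ->
    oc_ballK Rad (theta t) /\ oc_pospart (g (theta t)) <= M * gam.
  apply: ind1.
    split => //; apply: le_trans Hp1 _; rewrite ler_pM2r //; lra.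
  move=> t Ht [Hb Hp].
  have Htt : (1 <= t <= T)%N by move: Ht => /andP [-> /ltnW ->].
  have [_ _ _ Hv] := Hf t Htt.
  exact: (one_step Hc Hg L0 HL g0 Rp sp etap (ltW G0) HK HG E1 E2 HLQ Hb Hv Hp (Hst t Ht)).
by move=> t Ht; case: (P t Ht).
Qed.
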